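(* Let $f$ satisfy conditions (1) and (2b), and let $n\in\mathbb{N}_0$. In the expression \[ 2\pi\int_0^\infty f(r)\,r^{n+1}\sum_{k=0}^\infty(-1)^k\frac{(pr^2)^k}{k!}\,dr \] the order of summation and integration may be reversed, for arbitrary $p\ge0$.
   Context: $f:[0,\infty)\to\mathbb{R}$; $c_n=2\pi\int_0^\infty f(r)\,r^{n+1}dr$. Condition (1): there is a constant $F$ with $0\le f(r)\le F$ for all $r\ge0$, $c_0$ exists and $c_0>0$. Condition (2b): $c_{2n}$ exists for all $n\in\mathbb{N}_0$ and $c_n^{1/n}=o(n^{1/2})$ as $n\to\infty$. *)

(* Defs.v *)
From HB Require Import structures.
From mathcomp Require Import all_boot all_order all_algebra.
From mathcomp Require Import all_classical all_reals all_analysis.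
Set Implicit Arguments. Unset Strict Implicit. Unset Printing Implicit Defensive.
Import Order.TTheory GRing.Theory Num.Theory.
Import numFieldNormedType.Exports.
Local Open Scope classical_set_scope.
Local Open Scope ring_scope.

(* f : [0,oo) -> R is modelled as f : R -> R,
   only its values on [0, +oo[ matter. *)

Section Defs.
Variable R : realType.

Definition cexists (f : R -> R) (n : nat) : Prop :=
  (@lebesgue_measure R).-integrable `[0%R, +oo[%classic
     (fun r => (f r * r ^+ n.+1)%:E).

Definition cmom (f : R -> R) (n : nat) : R :=
  2 * pi * Rintegral (@lebesgue_measure R) `[0%R, +oo[%classic
     (fun r => f r * r ^+ n.+1).

Definition cond1 (f : R -> R) : Prop :=
  (exists F : R, forall r : R, 0 <= r -> 0 <= f r <= F) /\
  cexists f 0 /\ 0 < cmom f 0.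

Definition cond2b (f : R -> R) : Prop :=
  (forall n : nat, cexists f (2 * n)) /\
  (fun n : nat => cmom f n `^ (n%:R)^-1) =o_\oo (fun n : nat => Num.sqrt (n%:R : R)).

Definition expterm (p r : R) (k : nat) : R :=
  (-1) ^+ k * (p * r ^+ 2) ^+ k / (k`!)%:R.
End Defs.

(* Main.v *)
Require Import Defs.
From HB Require Import structures.
From mathcomp Require Import all_boot all_order all_algebra.
From mathcomp Require Import all_classical all_reals all_analysis.
Import Order.TTheory GRing.Theory Num.Theory.
Import numFieldNormedType.Exports.
Local Open Scope classical_set_scope.
Local Open Scope ring_scope.
From mathcomp Require Import measurable_realfun.
From mathcomp Require Import ring lra.
Lemma xk_le_expR (R : realType) (x : R) k : 0 <= x -> x ^+ k / k`!%:R <= expR x.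
Proof.
move=> x0; case: k => [|k].
  by rewrite expr0 fact0 divr1 (le_trans _ (expR_ge1Dx x)) ?lerDl.
by rewrite (le_trans _ (expR_ge1Dxn k x0))// lerDr.
Qed.
Lemma expR_nat (R : realType) (j : nat) : expR (j%:R : R) = expR 1 ^+ j.
Proof. by rewrite -expRM_natl mulr1. Qed.
Lemma key_ineq (R : realType) (p eps c : R) (n k : nat) : 0 <= p -> 0 <= eps ->
  c <= eps ^+ (2 * (n + k)) * ((2 * (n + k))%:R) ^+ (n + k) ->
  p ^+ k / k`!%:R * c <= n`!%:R * ((1 + p) * eps ^+ 2 * 2 * expR 1 ^+ 2) ^+ (n + k).
Proof.
move=> p0 e0 hc.
set j := (n + k)%N in hc *.
set e := expR 1 : R.
have e0' : 0 <= e by exact: expR_ge0.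
have E1 : (j%:R : R) ^+ k / k`!%:R <= e ^+ j by rewrite -expR_nat xk_le_expR.
have E2 : (j%:R : R) ^+ n <= n`!%:R * e ^+ j.
  by rewrite -ler_pdivrMl ?ltr0n ?fact_gt0// mulrC -expR_nat xk_le_expR.
have E3 : p ^+ k <= (1 + p) ^+ j.
  rewrite (@le_trans _ _ ((1 + p) ^+ k))//.
    by rewrite lerXn2r// ?nnegrE ?addr_ge0// lerDr.
  by rewrite ler_weXn2l ?lerDl// leq_addl.
have f0 : 0 < (k`!%:R : R) by rewrite ltr0n fact_gt0.
rewrite (@le_trans _ _ (p ^+ k / k`!%:R * (eps ^+ (2 * j) * (2 * j)%:R ^+ j)))//.
  by rewrite ler_wpM2l// divr_ge0// exprn_ge0.
have jj : (j%:R : R) ^+ j = j%:R ^+ k * j%:R ^+ n by rewrite -exprD addnC.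
have -> : p ^+ k / k`!%:R * (eps ^+ (2 * j) * (2 * j)%:R ^+ j) =
   p ^+ k * ((j%:R : R) ^+ k / k`!%:R) * (j%:R ^+ n) * (eps ^+ (2 * j) * 2 ^+ j).
  rewrite natrM exprMn jj.
  move: (p ^+ k) ((k`!%:R : R)^-1) (j%:R ^+ k : R) (j%:R ^+ n : R) (eps ^+ (2 * j)) (2 ^+ j : R).
  by move=> *; ring.
rewrite (@le_trans _ _ ((1 + p) ^+ j * e ^+ j * (n`!%:R * e ^+ j) * (eps ^+ (2 * j) * 2 ^+ j)))//.
  rewrite ler_wpM2r ?mulr_ge0 ?exprn_ge0//.
  have h1 := ler_pM (exprn_ge0 _ p0) (divr_ge0 (exprn_ge0 _ (ler0n _ _)) (ltW f0)) E3 E1.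
  exact: (ler_pM (mulr_ge0 (exprn_ge0 _ p0) (divr_ge0 (exprn_ge0 _ (ler0n _ _)) (ltW f0))) (exprn_ge0 _ (ler0n _ _)) h1 E2).
rewrite !exprMn mul2n -addnn exprD le_eqVlt; apply/orP; left; apply/eqP.
move: ((1 + p) ^+ j) (e ^+ j) (eps ^+ j) (2 ^+ j : R) (n`!%:R : R).
by move=> *; ring.
Qed.
Lemma cmom_bound (R : realType) (c eps : R) (j : nat) : 0 <= c -> (0 < j)%N ->
  `|c `^ (((2 * j)%N)%:R^-1)| <= eps * `|Num.sqrt (((2 * j)%N)%:R : R)| ->
  c <= eps ^+ (2 * j) * ((2 * j)%:R) ^+ j.
Proof.
move=> c0 j0; set m := (2 * j)%N.
have m0 : (m%:R : R) != 0 by rewrite pnatr_eq0 /m muln_eq0 negb_or /= -lt0n.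
rewrite ger0_norm ?powR_ge0// ger0_norm ?sqrtr_ge0// => h.
have -> : c = (c `^ (m%:R^-1)) ^+ m.
  by rewrite -powR_mulrn ?powR_ge0// -powRrM mulVf// powRr1.
rewrite (@le_trans _ _ ((eps * Num.sqrt (m%:R)) ^+ m))//.
  by rewrite lerXn2r// nnegrE ?powR_ge0// (le_trans _ h)// powR_ge0.
by rewrite exprMn {3}/m exprM sqr_sqrtr.
Qed.
Lemma nneseries_real (R : realType) (u : nat -> R) (l : R) :
  series u @ \oo --> l -> (\sum_(k <oo) (u k)%:E)%E = l%:E.
Proof.
move=> ul.
have -> : (fun N => \sum_(0 <= k < N) (u k)%:E)%E = EFin \o series u.
  by apply/funext => N /=; rewrite sumEFin.
rewrite EFin_lim; last by apply/cvg_ex; exists l.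
by rewrite (cvg_lim _ ul).
Qed.

Lemma cvg_series_bound (R : realType) (b : nat -> R) (C : R) (N : nat) :
  0 <= C -> (forall k, 0 <= b k) ->
  (forall k, (N <= k)%N -> b k <= C * (2^-1) ^+ k) -> cvgn (series b).
Proof.
move=> C0 b0 bC.
pose S := \sum_(i < N) b i * 2 ^+ i.
have S0 : 0 <= S by apply: sumr_ge0 => i _; rewrite mulr_ge0// exprn_ge0.
have h2 k : 2 ^+ k * (2^-1) ^+ k = 1 :> R by rewrite -exprMn divff// expr1n.
apply: (@series_le_cvg _ _ (geometric (C + S) (2^-1))) => //.
- by move=> k; rewrite /= mulr_ge0 ?addr_ge0// exprn_ge0.
- move=> k /=; have [Nk|kN] := leqP N k.
    by rewrite (le_trans (bC _ Nk))// ler_wpM2r ?exprn_ge0// lerDl.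
  have -> : b k = (b k * 2 ^+ k) * (2^-1) ^+ k by rewrite -mulrA h2 mulr1.
  rewrite ler_wpM2r ?exprn_ge0// (@le_trans _ _ S)// ?lerDr//.
  rewrite /S (bigD1 (Ordinal kN))//= lerDl.
  by apply: sumr_ge0 => i _; rewrite mulr_ge0// exprn_ge0.
- apply: is_cvg_geometric_series.
  by rewrite ger0_norm// invf_lt1// ltr1n.
Qed.
Lemma series_scale_exp (R : realType) (a x : R) :
  series (fun k => a * (x ^+ k / k`!%:R)) @ \oo --> a * expR x.
Proof.
have -> : series (fun k => a * (x ^+ k / k`!%:R)) = (fun N => a * series (exp_coeff x) N).
  by apply/funext => N; rewrite /series /= mulr_sumr.
apply: cvgMl_tmp; exact: is_cvg_series_exp_coeff.
Qed.
Section Main.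
Variable R : realType.
Local Notation mu := (@lebesgue_measure R).
Local Notation T := (measurableTypeR R).
Local Notation D := (`[0%R, +oo[%classic : set T).

Lemma mD : measurable D. Proof. exact: measurable_itv. Qed.

Lemma Dge0 (r : R) : D r -> 0 <= r.
Proof. by rewrite /= in_itv /= andbT. Qed.

Lemma mid : measurable_fun D (fun r : T => (r : R)).
Proof. by move=> _ B mB; apply: measurableI => //; exact: mD. Qed.

Lemma mXn m : measurable_fun D (fun r : T => (r : R) ^+ m).
Proof. exact: measurable_funX mid. Qed.

Lemma mfr (f : R -> R) : cexists f 0 -> measurable_fun D (fun r : T => f r * r).
Proof.
move=> /measurable_int /measurable_EFinP.
by [].
Qed.

Lemma mfrXq (f : R -> R) (m : nat) (q : T -> R) : cexists f 0 ->
  measurable_fun D q -> measurable_fun D (fun r : T => f r * r ^+ m.+1 * q r).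
Proof.
move=> cf mq.
have -> : (fun r : T => f r * r ^+ m.+1 * q r) = (fun r => f r * r * (r ^+ m * q r)).
  by apply/funext => r; rewrite exprS; ring.
apply: measurable_funM; first exact: mfr.
by apply: measurable_funM => //; exact: mXn.
Qed.

Lemma mexpq (p : R) : measurable_fun D (fun r : T => expR (p * r ^+ 2)).
Proof.
apply: (@measurableT_comp _ _ _ _ _ _ expR); first exact: measurable_expR.
apply: measurable_funM; first exact: measurable_cst.
exact: mXn.
Qed.

Lemma f_ge0 {f : R -> R} : cond1 f -> forall r, D r -> 0 <= f r.
Proof. by move=> [[F hF] _] r /(Dge0 _) /hF /andP[]. Qed.

Lemma cmom_ge0 {f : R -> R} m : cond1 f -> 0 <= cmom f m.
Proof.
move=> c1; rewrite /cmom mulr_ge0 ?mulr_ge0 ?pi_ge0//.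
apply: Rintegral_ge0 => r Dr.
by rewrite mulr_ge0 ?exprn_ge0 ?(f_ge0 c1 _ Dr) ?(Dge0 _ Dr).
Qed.

Lemma bk_bound (f : R -> R) (n : nat) (p : R) : cond1 f -> cond2b f -> 0 <= p ->
  exists N, forall k, (N <= k)%N ->
    p ^+ k / k`!%:R * Rintegral mu D (fun r => f r * r ^+ (2 * (n + k)).+1)
    <= (n`!%:R / (2 * pi)) * (2^-1) ^+ k.
Proof.
move=> c1 [c2 co] p0.
set e := expR 1 : R.
have e0 : 0 < e by exact: expR_gt0.
pose eps := ((1 + p) * e * 4)^-1.
have p1 : 0 < 1 + p by rewrite ltr_pwDl.
have eps0 : 0 < eps by rewrite invr_gt0 !mulr_gt0.
pose Q := (1 + p) * eps ^+ 2 * 2 * e ^+ 2.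
have QE : Q = 2^-1 * ((1 + p) * 4)^-1.
  by rewrite /Q /eps; field; rewrite !gt_eqF.
have Q0 : 0 <= Q by rewrite QE mulr_ge0// invr_ge0 mulr_ge0// ltW.
have Qh : Q <= 2^-1.
  rewrite QE ger_pMr// invr_le1 ?mulr_gt0//; last by rewrite unitfE mulf_neq0// gt_eqF.
  lra.
move/eqoP: co => /(_ eps eps0) [N _ HN].
exists N.+1 => k Nk.
set j := (n + k)%N.
have j0 : (0 < j)%N by rewrite /j addn_gt0 (leq_trans _ Nk) ?orbT.
have hm := HN (2 * j)%N.
have /hm hc : (N <= 2 * j)%N.
  by rewrite (leq_trans (ltnW Nk))// /j (leq_trans (leq_addl n k))// leq_pmull.
have hc2 := cmom_bound _ _ _ _ (cmom_ge0 (2 * j) c1) j0 hc.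
have hk := key_ineq _ _ _ _ n k p0 (ltW eps0) hc2.
have -> : p ^+ k / k`!%:R * Rintegral mu D (fun r => f r * r ^+ (2 * j).+1) =
   (p ^+ k / k`!%:R * cmom f (2 * j)) / (2 * pi).
  rewrite /cmom; move: (pi_gt0 R); generalize (@pi R) => P P0; field; rewrite gt_eqF// pnatr_eq0 -lt0n fact_gt0//.
rewrite [leRHS]mulrAC ler_pM2r ?invr_gt0 ?mulr_gt0 ?pi_gt0//.
rewrite (le_trans hk)// ler_wpM2l//.
rewrite (@le_trans _ _ ((2^-1) ^+ j))//.
  by rewrite lerXn2r// nnegrE// invr_ge0.
by rewrite ler_wiXn2l// ?invr_ge0 ?invf_le1 ?ler1n// leq_addl.
Qed.
Lemma core (f : R -> R) (n : nat) (p : R) : cond1 f -> cond2b f -> 0 <= p ->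
  mu.-integrable D (fun r => (f r * r ^+ (2 * n).+1 * expR (p * r ^+ 2))%:E).
Proof.
move=> c1 c2' p0; have [_ [cf0 _]] := c1; have [c2 _] := c2'.
pose g k r := f r * r ^+ (2 * n).+1 * ((p * r ^+ 2) ^+ k / k`!%:R).
have gE k r : g k r = (p ^+ k / k`!%:R) * (f r * r ^+ (2 * (n + k)).+1).
  rewrite /g exprMn -exprM mulnDr -addSn exprD.
  move: (f r) (r ^+ (2 * n).+1) (p ^+ k) (r ^+ (2 * k)) (k`!%:R : R)^-1.
  by move=> *; ring.
have g0 k r : D r -> 0 <= g k r.
  move=> Dr; rewrite gE mulr_ge0 ?divr_ge0 ?exprn_ge0//.
  by rewrite mulr_ge0 ?exprn_ge0 ?(f_ge0 c1 _ Dr) ?(Dge0 _ Dr).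
have mg k : measurable_fun D (fun r : T => (g k r)%:E).
  apply/measurable_realfun.measurable_EFinP; rewrite /g.
  apply: mfrXq => //.
  apply: measurable_realfun.measurable_funM; last exact: measurable_cst.
  apply: measurable_realfun.measurable_funX.
  apply: measurable_realfun.measurable_funM; first exact: measurable_cst.
  exact: mXn.
have G0 r : D r -> 0 <= f r * r ^+ (2 * n).+1 * expR (p * r ^+ 2).
  move=> Dr; rewrite mulr_ge0 ?expR_ge0//.
  by rewrite mulr_ge0 ?exprn_ge0 ?(f_ge0 c1 _ Dr) ?(Dge0 _ Dr).
have ptw r : D r -> (f r * r ^+ (2 * n).+1 * expR (p * r ^+ 2))%:E =
    (\sum_(k <oo) (g k r)%:E)%E.
  move=> Dr; symmetry; apply: (@nneseries_real _ (fun k => g k r)).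
  exact: series_scale_exp.
apply/integrableP; split.
  apply/measurable_realfun.measurable_EFinP.
  by apply: mfrXq => //; exact: mexpq.
pose b k := p ^+ k / k`!%:R * Rintegral mu D (fun r => f r * r ^+ (2 * (n + k)).+1).
have ib k : (\int[mu]_(x in D) (g k x)%:E)%E = (b k)%:E.
  under eq_integral do rewrite gE EFinM.
  rewrite (integralZl mD (c2 (n + k))).
  by rewrite /b [RHS]EFinM /Rintegral fineK// (integrable_fin_num mD (c2 (n + k))).
have b0 k : 0 <= b k.
  rewrite /b mulr_ge0 ?divr_ge0 ?exprn_ge0//.
  apply: Rintegral_ge0 => r Dr.
  by rewrite mulr_ge0 ?exprn_ge0 ?(f_ge0 c1 _ Dr) ?(Dge0 _ Dr).
have [N hN] := bk_bound _ n _ c1 c2' p0.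
have cb : cvgn (series b).
  apply: (@cvg_series_bound _ _ _ _ _ b0 hN).
  by rewrite divr_ge0// mulr_ge0// ltW// pi_gt0.
have -> : (\int[mu]_(x in D) `|(f x * x ^+ (2 * n).+1 * expR (p * x ^+ 2))%:E|)%E =
    (\int[mu]_(x in D) (\sum_(k <oo) (g k x)%:E))%E.
  by apply: eq_integral => r /[1!inE] Dr; rewrite gee0_abs ?lee_fin ?G0// ptw.
rewrite integral_nneseries//.
rewrite (eq_eseriesr (fun k _ => ib k)).
by rewrite (@nneseries_real _ _ _ cb) ltry.
Qed.
Lemma expterm_E (p r : R) k : expterm p r k = (- (p * r ^+ 2)) ^+ k / k`!%:R.
Proof. by rewrite /expterm -exprNn. Qed.

Lemma norm_expterm (p r : R) k : 0 <= p -> `|expterm p r k| = (p * r ^+ 2) ^+ k / k`!%:R.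
Proof.
move=> p0; rewrite expterm_E normrM normrX normrN normfV.
by rewrite (ger0_norm (mulr_ge0 p0 (sqr_ge0 r))) (ger0_norm (ler0n _ _)).
Qed.

Lemma psum_le_exp (x : R) N : 0 <= x -> series (exp_coeff x) N <= expR x.
Proof.
move=> x0; apply: nondecreasing_cvgn_le; last exact: is_cvg_series_exp_coeff.
by apply: nondecreasing_series => k _ _; exact: exp_coeff_ge0.
Qed.

Lemma inner_E (p r : R) : limn (series (expterm p r)) = expR (- (p * r ^+ 2)).
Proof.
have -> : expterm p r = exp_coeff (- (p * r ^+ 2)) by apply/funext => k; rewrite expterm_E.
by [].
Qed.
Lemma main (f : R -> R) (n : nat) (p : R) :
  cond1 f -> cond2b f -> 0 <= p ->
  let inner := fun r : R => limn (series (expterm p r)) in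
  let term := fun k : nat =>
    2 * pi * Rintegral (@lebesgue_measure R) `[0%R, +oo[
      (fun r => f r * r ^+ n.+1 * expterm p r k) in
  (@lebesgue_measure R).-integrable `[0%R, +oo[
     (fun r => (f r * r ^+ n.+1 * inner r)%:E) /\
  (forall k : nat, (@lebesgue_measure R).-integrable `[0%R, +oo[
     (fun r => (f r * r ^+ n.+1 * expterm p r k)%:E)) /\
  series term @ \oo -->
    2 * pi * Rintegral (@lebesgue_measure R) `[0%R, +oo[
      (fun r => f r * r ^+ n.+1 * inner r).
Proof.
move=> c1 c2 p0 inner term.
have [_ [cf0 _]] := c1.
have Gi := core f n p c1 c2 p0.
pose G r := f r * r ^+ (2 * n).+1 * expR (p * r ^+ 2).
pose H r := expR p * (f r * r ^+ 1) + G r.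
have Hi : mu.-integrable D (fun r : T => (H r)%:E).
  apply: (eq_integrable mD (fun r : T => ((expR p)%:E * (f r * r ^+ 1)%:E + (G r)%:E)%E)).
    by move=> r _; rewrite /H EFinD EFinM.
  apply: (integrableD mD); last exact: Gi.
  exact: (integrableZl mD).
have gH r : D r -> f r * r ^+ n.+1 * expR (p * r ^+ 2) <= H r.
  move=> Dr; have r0 := Dge0 _ Dr; have fr0 := f_ge0 c1 _ Dr.
  have G0 : 0 <= G r by rewrite /G !mulr_ge0 ?exprn_ge0 ?expR_ge0.
  have F0 : 0 <= expR p * (f r * r ^+ 1) by rewrite !mulr_ge0 ?exprn_ge0 ?expR_ge0.
  have [r1|r1] := leP r 1.
    have a1 : f r * r ^+ n.+1 <= f r * r ^+ 1.
      by rewrite ler_wpM2l// exprS expr1 ler_piMr// exprn_ile1.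
    have a2 : expR (p * r ^+ 2) <= expR p.
      by rewrite ler_expR ler_piMr// exprn_ile1.
    rewrite /H (@le_trans _ _ (expR p * (f r * r ^+ 1)))// ?lerDl//.
    by rewrite mulrC; apply: ler_pM; rewrite ?mulr_ge0 ?exprn_ge0 ?expR_ge0.
  rewrite /H (@le_trans _ _ (G r))// ?lerDr// /G.
  rewrite ler_wpM2r ?expR_ge0// ler_wpM2l// ler_weXn2l ?ltW//.
  by rewrite ltnS leq_pmull.
have gH' k r : D r -> `|f r * r ^+ n.+1 * expterm p r k| <= H r.
  move=> Dr; rewrite (le_trans _ (gH r Dr))// normrM norm_expterm//.
  rewrite ger0_norm ?mulr_ge0 ?exprn_ge0 ?(f_ge0 c1 _ Dr) ?(Dge0 _ Dr)//.
  by rewrite ler_wpM2l ?mulr_ge0 ?exprn_ge0 ?(f_ge0 c1 _ Dr) ?(Dge0 _ Dr)// xk_le_expR// mulr_ge0// sqr_ge0.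
have H0 r : D r -> 0 <= H r.
  by move=> Dr; rewrite (le_trans _ (gH' O r Dr)).
have mq k : measurable_fun D (fun r : T => expterm p r k).
  rewrite /expterm; apply: measurable_funM; last exact: measurable_cst.
  apply: measurable_funM; first exact: measurable_cst.
  apply: measurable_funX; apply: measurable_funM; first exact: measurable_cst.
  exact: mXn.
have mterm k : measurable_fun D (fun r : T => f r * r ^+ n.+1 * expterm p r k).
  exact: mfrXq.
have ik k : mu.-integrable D (fun r : T => (f r * r ^+ n.+1 * expterm p r k)%:E).
  apply: (le_integrable mD _ _ Hi).
    exact/measurable_EFinP.
  move=> r Dr /=; rewrite lee_fin (ger0_norm (H0 r Dr)).
  exact: gH'.
have innerE r : inner r = expR ((- p) * r ^+ 2) by rewrite /inner inner_E mulNr.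
have i1 : mu.-integrable D (fun r : T => (f r * r ^+ n.+1 * inner r)%:E).
  apply: (le_integrable mD _ _ Hi).
    apply/measurable_EFinP; apply: mfrXq => //.
    have -> : inner = (fun r : R => expR ((- p) * r ^+ 2)).
      by apply/funext => r; exact: innerE.
    exact: mexpq.
  move=> r Dr /=; rewrite lee_fin (ger0_norm (H0 r Dr)).
  rewrite (le_trans _ (gH r Dr))// innerE normrM (ger0_norm (expR_ge0 _)).
  rewrite ger0_norm ?mulr_ge0 ?exprn_ge0 ?(f_ge0 c1 _ Dr) ?(Dge0 _ Dr)//.
  rewrite ler_wpM2l ?mulr_ge0 ?exprn_ge0 ?(f_ge0 c1 _ Dr) ?(Dge0 _ Dr)// ler_expR.
  by rewrite mulNr lerNl (@le_trans _ _ 0)// ?oppr_le0 mulr_ge0// sqr_ge0.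
split; first exact: i1.
split; first exact: ik.
pose S N r := series (fun k => f r * r ^+ n.+1 * expterm p r k) N.
have mS N : measurable_fun D (fun r : T => (S N r)%:E).
  apply/measurable_EFinP; rewrite /S /series /=.
  by apply: measurable_sum => k; exact: mterm.
have SH N r : D r -> `|S N r| <= H r.
  move=> Dr; have g0 : 0 <= f r * r ^+ n.+1.
    by rewrite mulr_ge0 ?exprn_ge0 ?(f_ge0 c1 _ Dr) ?(Dge0 _ Dr).
  rewrite (le_trans (ler_norm_sum _ _ _))// (le_trans _ (gH r Dr))//.
  under eq_bigr do rewrite normrM norm_expterm// (ger0_norm g0).
  rewrite -mulr_sumr ler_wpM2l//.
  by apply: psum_le_exp; rewrite mulr_ge0// sqr_ge0.
have Sc r : D r -> S ^~ r @ \oo --> f r * r ^+ n.+1 * inner r.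
  move=> Dr; rewrite /S /inner inner_E.
  have -> : (fun k => f r * r ^+ n.+1 * expterm p r k) =
      (fun k => f r * r ^+ n.+1 * ((- (p * r ^+ 2)) ^+ k / k`!%:R)).
    by apply/funext => k; rewrite expterm_E.
  exact: series_scale_exp.
have mf : measurable_fun D (fun r : T => (f r * r ^+ n.+1 * inner r)%:E).
  apply/measurable_EFinP; apply: mfrXq => //.
  have -> : inner = (fun r : R => expR ((- p) * r ^+ 2)).
    by apply/funext => r; exact: innerE.
  exact: mexpq.
have fc : {ae mu, forall x, D x ->
    (fun N => (S N x)%:E) @ \oo --> (f x * x ^+ n.+1 * inner x)%:E}.
  apply: aeW => r Dr; apply: cvg_EFin; first exact: nearW.
  exact: Sc.
have fb : {ae mu, forall x N, D x -> (`|(S N x)%:E| <= (H x)%:E)%E}.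
  by apply: aeW => r N Dr /=; rewrite lee_fin SH.
have [_ _ dc] := dominated_convergence mD mS mf fc Hi fb.
pose u N := \sum_(0 <= k < N)
  Rintegral mu D (fun r => f r * r ^+ n.+1 * expterm p r k).
have intS N : (\int[mu]_(x in D) (S N x)%:E)%E = (u N)%:E.
  rewrite /S /series /=.
  under eq_integral do rewrite -sumEFin.
  rewrite (@integral_sum _ _ _ mu D mD nat (fun k (r : T) => (f r * r ^+ n.+1 * expterm p r k)%:E) ik).
  rewrite /u -sumEFin; apply: eq_bigr => k _.
  by rewrite /Rintegral fineK// (integrable_fin_num mD (ik k)).
have ig := ik O.
have dc' : u @ \oo --> Rintegral mu D (fun r => f r * r ^+ n.+1 * inner r).
  apply: (@fine_cvg _ _ _ _ (EFin \o u)).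
  have -> : EFin \o u = (fun N => \int[mu]_(x in D) (S N x)%:E)%E.
    by apply/funext => N; rewrite intS.
  rewrite /Rintegral fineK//.
  have := integrable_fin_num mD i1; exact.
have -> : series term = (fun N => 2 * pi * u N).
  by apply/funext => N; rewrite /series /= /u mulr_sumr.
exact: cvgMl_tmp dc'.
Qed.
End Main.

Theorem lemma7 (R : realType) (f : R -> R) (n : nat) (p : R) :
  cond1 f -> cond2b f -> 0 <= p ->
  let inner := fun r : R => limn (series (expterm p r)) in
  let term := fun k : nat =>
    2 * pi * Rintegral (@lebesgue_measure R) `[0%R, +oo[
      (fun r => f r * r ^+ n.+1 * expterm p r k) in
  (* the integral of the summed integrand exists *)
  (@lebesgue_measure R).-integrable `[0%R, +oo[
     (fun r => (f r * r ^+ n.+1 * inner r)%:E) /\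
  (* each termwise integral exists *)
  (forall k : nat, (@lebesgue_measure R).-integrable `[0%R, +oo[
     (fun r => (f r * r ^+ n.+1 * expterm p r k)%:E)) /\
  (* the series of termwise integrals converges to the integral *)
  series term @ \oo -->
    2 * pi * Rintegral (@lebesgue_measure R) `[0%R, +oo[
      (fun r => f r * r ^+ n.+1 * inner r).
Proof. exact: main. Qed.
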